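(* Let $A=(a_{i,k})_{0\le i,k\le d-1}\in\mathbb{Z}^{d\times d}$ be a reduced idealizing matrix. Then the number of vectors $\beta\in\mathbb{Z}^d$ such that the $(d+1)\times(d+1)$ matrix $$\tilde A=\begin{pmatrix}A&\beta\\0&1\end{pmatrix}$$ is a reduced idealizing matrix equals $a_{d-1,d-1}^{\,d}$.
   Context: An idealizing matrix is an upper triangular integer matrix $A=(a_{i,k})_{0\le i,k\le d-1}$ with nonzero diagonal entries such that, for each $0\le j\le d-2$, the vector obtained by shifting the $j$-th column down by one, namely $(0,a_{0,j},a_{1,j},\dots,a_{d-2,j})^T$, lies in the $\mathbb{Z}$-span of columns $0,1,\dots,j+1$ of $A$. It is called reduced if its diagonal entries are positive and, in every row $i$, the entries $a_{i,k}$ with $k>i$ satisfy $0\le a_{i,k}\le a_{i,i}-1$. *)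

(* Defs.v *)
From HB Require Import structures.
From mathcomp Require Import all_boot all_order all_algebra.
Set Implicit Arguments. Unset Strict Implicit. Unset Printing Implicit Defensive.
Import Order.TTheory GRing.Theory Num.Theory.
Local Open Scope ring_scope.

(* Matrices of size d = m.+1 (indices 0..m). *)

Definition shiftcol (m : nat) (A : 'M[int]_m.+1) (j i : 'I_m.+1) : int :=
  if (i : nat) == 0%N then 0 else A (inord i.-1) j.

Definition upper_triangular (m : nat) (A : 'M[int]_m.+1) : Prop :=
  forall i j : 'I_m.+1, (j < i)%N -> A i j = 0.

Definition idealizing (m : nat) (A : 'M[int]_m.+1) : Prop :=
  upper_triangular A /\
  (forall i : 'I_m.+1, A i i != 0) /\
  (forall j : 'I_m.+1, (j < m)%N ->
     exists c : 'I_m.+1 -> int,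
       forall i : 'I_m.+1,
         shiftcol A j i = \sum_(k : 'I_m.+1 | (k <= j.+1)%N) c k * A i k).

Definition reduced (m : nat) (A : 'M[int]_m.+1) : Prop :=
  (forall i : 'I_m.+1, 0 < A i i) /\
  (forall i k : 'I_m.+1, (i < k)%N -> 0 <= A i k <= A i i - 1).

Definition reduced_idealizing (m : nat) (A : 'M[int]_m.+1) : Prop :=
  idealizing A /\ reduced A.

Definition ext_mx (n : nat) (A : 'M[int]_n.+1) (beta : 'cV[int]_n.+1)
  : 'M[int]_(n.+1 + 1) :=
  block_mx A beta 0 1%:M.

(* Main.v *)
Require Import Defs.
From HB Require Import structures.
From mathcomp Require Import all_boot all_order all_algebra.
Import Order.TTheory GRing.Theory Num.Theory.
Local Open Scope ring_scope.

Lemma count_mod_iota (q r k : nat) : (r < q)%N ->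
  count (fun x => x %% q == r)%N (iota 0 (q * k)) = k.
Proof.
move=> rq; elim: k => [|k IH]; first by rewrite muln0.
rewrite mulnSr iotaD count_cat IH add0n.
have -> : iota (q * k) q = [seq (q * k + i)%N | i <- iota 0 q].
  by rewrite -iotaDl addn0.
rewrite count_map.
have -> : count (preim (addn (q * k)) (fun x : nat => x %% q == r)%N) (iota 0 q)
        = count (pred1 r) (iota 0 q).
  apply: eq_in_count => x; rewrite mem_iota add0n => /andP[_ xq] /=.
  by rewrite mulnC modnMDl modn_small.
by rewrite count_uniq_mem ?iota_uniq // mem_iota add0n rq addn1.
Qed.

Lemma count_dvd1 (a D K : int) : 0 < a -> 0 < D -> (a %| D)%Z -> (a %| K)%Z ->
  count (fun x : nat => (D %| a * x%:Z - K)%Z) (iota 0 `|D|%N) = `|a|%N.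
Proof.
move=> a0 D0 aD aK.
have [q Dq] : exists q, D = a * q%:Z.
  exists `|(D %/ a)%Z|%N; rewrite gez0_abs; last first.
    by rewrite divz_ge0 ?ltW.
  by rewrite mulrC divzK.
have [K' KK] : exists K', K = a * K' by exists (K %/ a)%Z; rewrite mulrC divzK.
have q0 : (0 < q)%N.
  by move: D0; rewrite Dq pmulr_rgt0 // ltz_nat.
have qn0 : q%:Z != 0 by rewrite eqz_nat -lt0n.
pose r := `|(K' %% q%:Z)%Z|%N.
have rq : (r < q)%N.
  rewrite -ltz_nat /r gez0_abs ?modz_ge0 //.
  by rewrite -[X in _ < X]gez0_abs ?ltz_pmod // ltW // ltz_nat.
have -> : `|D|%N = (q * `|a|)%N by rewrite Dq abszM /= mulnC.
rewrite -[RHS](count_mod_iota q r _ rq); apply: eq_count => x /=.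
rewrite Dq KK -mulrBr dvdz_mul2l ?(gt_eqF a0) //.
rewrite -eqz_mod_dvd modz_nat /r -eqz_nat gez0_abs ?modz_ge0 //.
Qed.

Fixpoint box (ds : seq nat) : seq (seq int) :=
  if ds is d :: ds' then [seq (x%:Z) :: l | l <- box ds', x <- iota 0 d]
  else [:: [::]].

Fixpoint sol (M : nat -> nat -> int) (w : nat -> int) (a : int) (N r : nat)
  (l : seq int) : option (seq int) :=
  match l with
  | [::] => Some [::]
  | x :: l' =>
    match sol M w a N r.+1 l' with
    | None => None
    | Some cs =>
      let t := a * x - w r - \sum_(r.+1 <= k < N) M r k * cs`_(k - r.+1) in
      if (M r r %| t)%Z then Some ((t %/ M r r)%Z :: cs) else None
    end
  end.

Lemma if_some_none (T : eqType) (b : bool) (x : T) :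
  ((if b then Some x else None) != None) = b.
Proof. by case: b. Qed.

Lemma sumn_count (T : Type) (P : pred T) (k : nat) (s : seq T) :
  sumn [seq (P x * k)%N | x <- s] = (count P s * k)%N.
Proof. by elim: s => //= x s ->; rewrite mulnDl. Qed.

Lemma count_sol M w a N m r : 0 < a -> (forall i k, (a %| M i k)%Z) ->
  (forall i, (a %| w i)%Z) -> (forall i, (r <= i)%N -> 0 < M i i) ->
  count (fun l => sol M w a N r l != None)
    (box [seq `|M i i|%N | i <- iota r m]) = (`|a| ^ m)%N.
Proof.
move=> a0 aM aw Mpos; elim: m r Mpos => [|m IH] r Mpos //=.
rewrite count_flatten -map_comp.
rewrite (eq_map (g := fun l => ((sol M w a N r.+1 l != None) * `|a|)%N)); last first.
  move=> l; rewrite /comp count_map.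
  case E: (sol M w a N r.+1 l) => [cs|]; last first.
    rewrite mul0n (@eq_count _ _ pred0) ?count_pred0 //.
    by move=> x; rewrite /preim /= E.
  have hK : (a %| w r + \sum_(r.+1 <= k < N) M r k * cs`_(k - r.+1))%Z.
    by rewrite rpredD // rpred_sum // => k _; apply: dvdz_mulr.
  rewrite mul1n -(count_dvd1 _ _ _ a0 (Mpos r (leqnn r)) (aM r r) hK).
  apply: eq_count => x; rewrite /preim /= E opprD addrA.
  exact: if_some_none.
rewrite sumn_count IH ?expnS 1?mulnC // => i ri; apply: Mpos; exact: ltnW.
Qed.

Lemma sol_complete M w a N r l (c : nat -> int) : (r + size l = N)%N ->
  (forall i, (r <= i < N)%N -> M i i != 0) ->
  (forall i, (r <= i < N)%N ->
     \sum_(i <= k < N) M i k * c k = a * l`_(i - r) - w i) ->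
  sol M w a N r l = Some [seq c k | k <- iota r (size l)].
Proof.
elim: l r => [|x l IH] r //= rN Mnz Hc.
rewrite (IH r.+1); first last.
- move=> i /andP[ri iN]; rewrite Hc ?(ltnW ri) ?iN //.
  by rewrite -(subnSK ri).
- by move=> i /andP[ri iN]; apply: Mnz; rewrite iN (ltnW ri).
- by rewrite addSnnS.
have rN' : (r < N)%N by rewrite -rN addnS ltnS leq_addr.
have -> : \sum_(r.+1 <= k < N) M r k * [seq c k | k <- iota r.+1 (size l)]`_(k - r.+1)
        = \sum_(r.+1 <= k < N) M r k * c k.
  apply: eq_big_nat => k /andP[rk kN].
  rewrite (nth_map 0%N); last by rewrite size_iota -(ltn_add2l r.+1) subnKC // addSnnS rN.
  by rewrite nth_iota ?subnKC // -(ltn_add2l r.+1) subnKC // addSnnS rN.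
have := Hc r; rewrite leqnn rN' subnn /= => /(_ isT).
rewrite big_ltn // => Hr.
have -> : a * x - w r - \sum_(r.+1 <= k < N) M r k * c k = M r r * c r.
  by rewrite -Hr addrK.
by rewrite dvdz_mulr ?dvdzz // mulKz // Mnz // leqnn rN'.
Qed.

Lemma sol_sound M w a N r l cs : (r + size l = N)%N ->
  sol M w a N r l = Some cs ->
  size cs = size l /\ forall i, (r <= i < N)%N ->
     \sum_(i <= k < N) M i k * cs`_(k - r) = a * l`_(i - r) - w i.
Proof.
elim: l r cs => [|x l IH] r cs /= rN.
  case=> <-; split=> // i /andP[ri iN].
  by move: iN; rewrite -rN addn0 ltnNge ri.
case E: (sol M w a N r.+1 l) => [cs'|] //; case: ifP => // dv [<-].
have rN1 : (r.+1 + size l = N)%N by rewrite addSnnS.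
have [sz Hs] := IH _ _ rN1 E.
split; first by rewrite /= sz.
move=> i /andP[ri iN].
set q := (_ %/ _)%Z.
have shift : forall j, (r < j)%N -> (cs'`_(j - r.+1)) = ((q :: cs')`_(j - r)).
  by move=> j rj; rewrite -(subnSK rj).
case: (ltngtP r i) ri => // [ri|ri] _.
  rewrite -(subnSK ri) /= -(Hs i); last by rewrite ri.
  apply: eq_big_nat => k /andP[ik _]; rewrite -shift //.
  exact: leq_trans ri ik.
subst i; rewrite big_ltn // subnn /= /q mulrC divzK //.
have -> : \sum_(r.+1 <= k < N) M r k * (q :: cs')`_(k - r)
        = \sum_(r.+1 <= k < N) M r k * cs'`_(k - r.+1).
  by apply: eq_big_nat => k /andP[rk _]; rewrite -shift.
by rewrite subrK.
Qed.

Lemma mem_box ds l : l \in box ds <->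
  size l = size ds /\ forall i, (i < size ds)%N -> 0 <= l`_i < (nth 0%N ds i)%:Z.
Proof.
elim: ds l => [|d ds IH] l /=.
  rewrite inE; split; first by move/eqP->.
  by case=> /size0nil ->.
split.
  case/allpairsP=> [[l' x]] /= [/IH [sz H] xi ->]; split; first by rewrite /= sz.
  move=> [|i] /=; last by rewrite ltnS; apply: H.
  by move: xi; rewrite mem_iota add0n ltz_nat /=.
case: l => [|y l'] [//= sz H].
apply/allpairsP; exists (l', `|y|%N) => /=.
have y0 : 0 <= y by have /andP[] := H 0%N isT.
split; last by rewrite gez0_abs.
  by apply/IH; split; [case: sz | move=> i ilt; apply: (H i.+1)].
rewrite mem_iota add0n -ltz_nat gez0_abs //.
by have /andP[] := H 0%N isT.
Qed.

Lemma box_uniq ds : uniq (box ds).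
Proof.
elim: ds => [|d ds IH] //=.
apply: allpairs_uniq => //; first exact: iota_uniq.
by move=> [l1 x1] [l2 x2] _ _ /= [-> ->].
Qed.

Lemma diag_div n (A : 'M[int]_n.+1) : idealizing A ->
  forall j : nat, (j <= n)%N -> forall (k i : 'I_n.+1), (k <= j)%N ->
    (A (inord j) (inord j) %| A i k)%Z.
Proof.
case=> UT [Dnz Hid].
elim=> [|j IH] jn k i kj.
  have k0 : k = inord 0 by apply/val_inj; rewrite /= inordK //; move: kj; rewrite leqn0 => /eqP.
  subst k; have [i0|i0] := posnP i.
    by have -> : i = inord 0 by apply/val_inj; rewrite /= inordK.
  by rewrite UT ?dvdz0 // inordK.
have jn' : (j < n)%N by [].
have [J JE] : {J : 'I_n.+1 | (J : nat) = j} by exists (inord j); rewrite inordK // ltnW.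
have [K KE] : {K : 'I_n.+1 | (K : nat) = j.+1} by exists (inord j.+1); rewrite inordK.
have -> : inord j.+1 = K by apply/val_inj; rewrite /= inordK.
have JN : (J < n)%N by rewrite JE.
have [c Hc] := Hid J JN.
have Hrow : forall i0 : 'I_n.+1, shiftcol A J i0 =
    c K * A i0 K + \sum_(k0 : 'I_n.+1 | (k0 <= j)%N) c k0 * A i0 k0.
  move=> i0; rewrite Hc (bigD1 K) /=; last by rewrite KE JE.
  congr (_ + _); apply: eq_bigl => k0; rewrite JE -(inj_eq val_inj) /= KE.
  by rewrite andbC -ltn_neqAle.
have hJ : A J J = c K * A K K.
  have := Hrow K; rewrite /shiftcol KE /= big1 ?addr0.
    by rewrite -JE inord_val => ->.
  by move=> k0 k0j; rewrite UT ?mulr0 // KE ltnS.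
have cK : c K != 0.
  by apply: contra (Dnz J) => /eqP c0; rewrite hJ c0 mul0r.
have divK : forall i0 : 'I_n.+1, (A K K %| A i0 K)%Z.
  move=> i0; rewrite -(dvdz_mul2l cK) -hJ.
  have -> : c K * A i0 K = shiftcol A J i0 -
        \sum_(k0 : 'I_n.+1 | (k0 <= j)%N) c k0 * A i0 k0 by rewrite Hrow addrK.
  apply: rpredB.
    rewrite /shiftcol; case: ifP => _; first exact: dvdz0.
    by have := IH (ltnW jn) J (inord i0.-1); rewrite -JE inord_val; apply.
  by apply: rpred_sum => k0 k0j; apply: dvdz_mull; have := IH (ltnW jn) k0 i0 k0j; rewrite -JE inord_val.
rewrite leq_eqVlt in kj; case/orP: kj => [/eqP kE|kj].
  by have -> : k = K by apply/val_inj; rewrite /= kE KE.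
apply: (@dvdz_trans (A J J)); first by rewrite hJ dvdz_mull ?dvdzz.
by rewrite -JE inord_val in IH; apply: IH; rewrite JE // ltnW.
Qed.

Lemma extE n (A : 'M[int]_n.+1) (b : 'cV[int]_n.+1) (i j : 'I_((n+1).+1)) :
  (ext_mx A b : 'M_((n+1).+1)) i j =
  if (i < n.+1)%N then (if (j < n.+1)%N then A (inord i) (inord j) else b (inord i) 0)
  else (if (j < n.+1)%N then 0 else 1).
Proof.
move: i j; rewrite -[(n+1).+1]/(n.+1 + 1)%N => i j.
rewrite /ext_mx.
case: (splitP i) => [i' ei|i' ei]; case: (splitP j) => [j' ej|j' ej].
- have -> : i = lshift 1 i' by apply/val_inj.
  have -> : j = lshift 1 j' by apply/val_inj.
  by rewrite block_mxEul /= !inord_val.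
- have -> : i = lshift 1 i' by apply/val_inj.
  have -> : j = rshift n.+1 j' by apply/val_inj.
  by rewrite block_mxEur /= ?inord_val (ord1 j').
- have -> : i = rshift n.+1 i' by apply/val_inj.
  have -> : j = lshift 1 j' by apply/val_inj.
  by rewrite block_mxEdl /= mxE.
- have -> : i = rshift n.+1 i' by apply/val_inj.
  have -> : j = rshift n.+1 j' by apply/val_inj.
  by rewrite block_mxEdr /= (ord1 i') (ord1 j') mxE.
Qed.

From mathcomp Require Import zify.

Lemma sum_nat N (P : pred nat) (F : 'I_N.+1 -> int) :
  \sum_(k < N.+1 | P k) F k = \sum_(0 <= k < N.+1 | P k) F (inord k).
Proof. by rewrite big_mkord; apply: eq_bigr => k _; rewrite inord_val. Qed.

Lemma EE n (A : 'M[int]_n.+1) (b : 'cV[int]_n.+1) (i j : nat) :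
  (i < (n+1).+1)%N -> (j < (n+1).+1)%N ->
  (ext_mx A b : 'M_((n+1).+1)) (inord i) (inord j) =
  if (i < n.+1)%N then (if (j < n.+1)%N then A (inord i) (inord j) else b (inord i) 0)
  else (if (j < n.+1)%N then 0 else 1).
Proof.
move=> ilt jlt; rewrite extE !inordK //; lia.
Qed.

Lemma shift_ext n (A : 'M[int]_n.+1) (b : 'cV[int]_n.+1) (j i : nat) :
  (i < n.+1)%N -> (j < n.+1)%N ->
  shiftcol (ext_mx A b : 'M_((n+1).+1)) (inord j) (inord i) =
  shiftcol A (inord j) (inord i).
Proof.
move=> ilt jlt; rewrite /shiftcol !inordK //; try lia.
case: ifP => // i0; rewrite EE ?ifT ?inordK //; lia.
Qed.

Lemma shift_ext_last n (A : 'M[int]_n.+1) (b : 'cV[int]_n.+1) (j : nat) :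
  (j < n.+1)%N ->
  shiftcol (ext_mx A b : 'M_((n+1).+1)) (inord j) (inord n.+1) =
  A (inord n) (inord j).
Proof.
move=> jlt; rewrite /shiftcol !inordK //=; try lia.
rewrite EE ?ifT ?inordK //; lia.
Qed.

Lemma ord_nat N (P : 'I_N.+1 -> Prop) : (forall i : nat, (i < N.+1)%N -> P (inord i)) -> forall i, P i.
Proof. by move=> H i; rewrite -(inord_val i); apply: H. Qed.

Lemma char_back n (A : 'M[int]_n.+1) (b : 'cV[int]_n.+1) :
  reduced_idealizing A ->
  (forall i : 'I_n.+1, 0 <= b i 0 <= A i i - 1) ->
  (exists c : 'I_n.+1 -> int, forall i : 'I_n.+1,
     \sum_(k < n.+1) A i k * c k = A ord_max ord_max * b i 0 - shiftcol A ord_max i) ->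
  @reduced_idealizing (n + 1)%N (ext_mx A b).
Proof.
move=> [[UT [Dnz Hid]] [Dpos Red]] Hb [c0 Hc0].
split; [split; [|split] | split].
- apply: ord_nat => i ilt; apply: ord_nat => j jlt ji.
  rewrite (inordK ilt) (inordK jlt) in ji.
  rewrite EE //; case: (ltnP i n.+1) => i1; case: (ltnP j n.+1) => j1 //; try lia.
  by apply: UT; rewrite !inordK.
- apply: ord_nat => i ilt; rewrite EE //.
  by case: (ltnP i n.+1) => i1; [exact: Dnz|].
- move=> j0; rewrite -(inord_val j0); move: (ltn_ord j0); move: (nat_of_ord j0) => j jlt; rewrite (inordK jlt) => jn; clear j0.
  have iotaE : index_iota 0 (n+1).+1 = index_iota 0 n.+2 by rewrite addn1.
  have inordn : inord n = ord_max :> 'I_n.+1 by apply/val_inj; rewrite /= inordK.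
  case: (ltnP j n) => jn'.
  + have jn1 : ((inord j : 'I_n.+1) < n)%N by rewrite inordK //; lia.
    have [cA HcA] := Hid (inord j) jn1.
    exists (fun k : 'I_((n+1).+1) => if (k < n.+1)%N then cA (inord k) else 0).
    move=> i0; rewrite -(inord_val i0); move: (ltn_ord i0); move: (nat_of_ord i0) => i ilt; clear i0.
    rewrite (sum_nat _ (fun k => k <= j.+1)%N) big_mkcond iotaE big_nat_recr //=.
    rewrite ifF; last lia.
    rewrite addr0.
    case: (ltnP i n.+1) => i1.
    * rewrite shift_ext; [|lia|lia]. rewrite (HcA (inord i)) (sum_nat _ (fun k => k <= (inord j : 'I_n.+1).+1)%N)  (@inordK n j); last lia. rewrite big_mkcond.
      apply: eq_big_nat => k /andP[_ klt].
      rewrite inordK; last lia.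
      case: ifP => // _; rewrite klt EE; [|lia|lia]; by rewrite i1 klt.
    * have -> : i = n.+1 by lia.
      rewrite shift_ext_last; last lia.
      rewrite (UT (inord n) (inord j)); last by rewrite !inordK //; lia.
      rewrite big1_seq // => k /andP[_]; rewrite mem_index_iota => /andP[_ klt].
      case: ifP => // _; rewrite inordK; last lia.
      by rewrite klt EE; [rewrite ltnn klt mulr0 | lia | lia].
  + have jE : j = n by lia.
    subst j.
    exists (fun k : 'I_((n+1).+1) => if (k < n.+1)%N then - c0 (inord k) else A ord_max ord_max).
    move=> i0; rewrite -(inord_val i0); move: (ltn_ord i0); move: (nat_of_ord i0) => i ilt; clear i0.
    rewrite (sum_nat _ (fun k => k <= n.+1)%N) big_mkcond iotaE big_nat_recr //=.
    rewrite inordK // ltnn ifT ?leqnn //.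
    case: (ltnP i n.+1) => i1.
    * rewrite shift_ext // EE ?i1 ?ltnn //; try lia.
      rewrite inordn.
      have := Hc0 (inord i); rewrite (sum_nat _ (fun _ => true)) => H.
      rewrite (eq_big_nat _ _ (F2 := fun k => - (A (inord i) (inord k) * c0 (inord k)))).
        by rewrite sumrN H opprB subrK.
      move=> k /andP[_ klt]; rewrite inordK; last lia.
      rewrite ifT; last lia.
      rewrite klt EE; [|lia|lia].
      by rewrite i1 klt mulNr mulrC.
    * have -> : i = n.+1 by lia.
      rewrite shift_ext_last // EE; [|lia|lia]. rewrite ltnn mulr1 inordn.
      rewrite big1_seq ?add0r // => k /andP[_]; rewrite mem_index_iota => /andP[_ klt].
      rewrite ifT; last lia. rewrite inordK; last lia.
      by rewrite klt EE; [rewrite ltnn klt mulr0 | lia | lia].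
- apply: ord_nat => i ilt; rewrite EE //.
  by case: (ltnP i n.+1) => i1; [exact: Dpos|].
- apply: ord_nat => i ilt; apply: ord_nat => k klt ik.
  rewrite (inordK ilt) (inordK klt) in ik.
  rewrite !EE //; case: (ltnP i n.+1) => i1; case: (ltnP k n.+1) => k1 //; try lia.
  by apply: Red; rewrite !inordK.
Qed.

Lemma char_fwd n (A : 'M[int]_n.+1) (b : 'cV[int]_n.+1) :
  reduced_idealizing A ->
  @reduced_idealizing (n + 1)%N (ext_mx A b) ->
  (forall i : 'I_n.+1, 0 <= b i 0 <= A i i - 1) /\
  (exists c : 'I_n.+1 -> int, forall i : 'I_n.+1,
     \sum_(k < n.+1) A i k * c k = A ord_max ord_max * b i 0 - shiftcol A ord_max i).
Proof.
move=> [[UT [Dnz Hid]] [Dpos Red]] [[UTE [DnzE HidE]] [DposE RedE]].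
have iotaE : index_iota 0 (n+1).+1 = index_iota 0 n.+2 by rewrite addn1.
have inordn : inord n = ord_max :> 'I_n.+1 by apply/val_inj; rewrite /= inordK.
split.
  move=> i0; rewrite -(inord_val i0); move: (ltn_ord i0); move: (nat_of_ord i0) => i ilt; clear i0.
  have := RedE (inord i) (inord n.+1).
  rewrite !inordK; [|lia|lia].
  move=> /(_ ilt); rewrite !EE; [|lia|lia|lia|lia].
  by rewrite ilt ltnn.
have nlt : ((inord n : 'I_((n+1).+1)) < n + 1)%N by rewrite inordK; lia.
have [c Hc] := HidE (inord n) nlt.
have ca : c (inord n.+1) = A ord_max ord_max.
  have := Hc (inord n.+1).
  rewrite shift_ext_last // inordn => ->.
  rewrite (sum_nat _ (fun k => k <= (inord n : 'I_((n+1).+1)).+1)%N).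
  rewrite big_mkcond iotaE big_nat_recr //=.
  rewrite big1_seq ?add0r; last first.
    move=> k /andP[_]; rewrite mem_index_iota => /andP[_ klt].
    case: ifP => // _; rewrite EE; [|lia|lia].
    by rewrite ltnn klt mulr0.
  rewrite !inordK; last lia.
  by rewrite ltnSn EE; [rewrite ltnn mulr1|lia|lia].
exists (fun k : 'I_n.+1 => - c (inord k)).
move=> i0; rewrite -(inord_val i0); move: (ltn_ord i0); move: (nat_of_ord i0) => i ilt; clear i0.
have := Hc (inord i).
rewrite shift_ext; [|lia|lia].
rewrite inordn => ->.
rewrite (sum_nat _ (fun k => k <= (inord n : 'I_((n+1).+1)).+1)%N).
rewrite [in RHS]big_mkcond iotaE big_nat_recr //=.
rewrite (sum_nat _ (fun _ => true)).
rewrite inordK; last lia.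
rewrite leqnn EE; [|lia|lia].
rewrite ilt ltnn ca.
rewrite opprD addrCA subrr addr0 -sumrN.
apply: eq_big_nat => k /andP[_ klt].
rewrite inordK; last lia.
rewrite ifT; last lia.
rewrite EE; [|lia|lia].
by rewrite ilt klt mulrN mulrC.
Qed.


Lemma sum_tri n (A : 'M[int]_n.+1) (c : nat -> int) (i : nat) :
  upper_triangular A -> (i < n.+1)%N ->
  \sum_(k < n.+1) A (inord i) k * c k =
  \sum_(i <= k < n.+1) A (inord i) (inord k) * c k.
Proof.
move=> UT ilt.
rewrite (sum_nat _ (fun _ => true)) (big_cat_nat (leq0n i) (ltnW ilt)) /=.
rewrite big1_seq ?add0r; last first.
  move=> k /andP[_]; rewrite mem_index_iota => /andP[_ ki].
  by rewrite (UT (inord i) (inord k)) ?mul0r // !inordK //; lia.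
apply: eq_big_nat => k /andP[_ klt]; by rewrite inordK.
Qed.

Theorem lemma3p1 (n : nat) (A : 'M[int]_n.+1) :
  reduced_idealizing A ->
  exists s : seq 'cV[int]_n.+1,
    [/\ uniq s,
        (forall beta : 'cV[int]_n.+1,
            beta \in s <-> @reduced_idealizing (n + 1)%N (ext_mx A beta))
      & (size s)%:Z = A ord_max ord_max ^+ n.+1].
Proof.
move=> RI; have RI' := RI; move: RI' => [[UT [Dnz Hid]] [Dpos Red]].
pose a := A ord_max ord_max.
pose M := fun i k : nat => A (inord i) (inord k).
pose w := fun i : nat => shiftcol A ord_max (inord i).
pose ds := [seq `|M i i|%N | i <- iota 0 n.+1].
pose vec := fun l : seq int => \col_(i < n.+1) l`_i : 'cV[int]_n.+1.
have inordn : inord n = ord_max :> 'I_n.+1 by apply/val_inj; rewrite /= inordK.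
have adiv : forall i k : 'I_n.+1, (a %| A i k)%Z.
  move=> i k; have := @diag_div n A (proj1 RI) n (leqnn n) k i (ltn_ord k).
  by rewrite inordn.
have a0 : 0 < a by apply: Dpos.
have aM : forall i k, (a %| M i k)%Z by move=> i k; apply: adiv.
have aw : forall i, (a %| w i)%Z.
  by move=> i; rewrite /w /shiftcol; case: ifP => _; [exact: dvdz0 | exact: adiv].
have Mpos : forall i, (0 <= i)%N -> 0 < M i i by move=> i _; apply: Dpos.
have Mnz : forall i, (0 <= i < n.+1)%N -> M i i != 0 by move=> i _; apply: Dnz.
have sizebox : forall l, l \in box ds -> size l = n.+1.
  by move=> l /mem_box [-> _]; rewrite size_map size_iota.
have vecE : forall l (i : 'I_n.+1), vec l i 0 = l`_i by move=> l i; rewrite mxE.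
exists [seq vec l | l <- box ds & sol M w a n.+1 0 l != None].
split.
- rewrite map_inj_in_uniq ?filter_uniq ?box_uniq //.
  move=> l1 l2; rewrite !mem_filter => /andP[_ b1] /andP[_ b2] E.
  apply: (@eq_from_nth _ 0); first by rewrite !sizebox.
  move=> i; rewrite sizebox // => ilt.
  have := congr1 (fun B : 'cV[int]_n.+1 => B (inord i) 0) E.
  by rewrite /= !vecE inordK.
- move=> beta; split.
  + case/mapP=> l; rewrite mem_filter => /andP[sl bl] ->.
    case E: (sol M w a n.+1 0 l) sl => [cs|] // _.
    have [szcs Hs] := @sol_sound M w a n.+1 0 l cs (sizebox l bl) E.
    apply: char_back => //.
      move=> i; rewrite vecE.
      move/mem_box: bl => [_ /(_ i)]; rewrite size_map size_iota ltn_ord => /(_ isT).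
      rewrite (nth_map 0%N) ?size_iota // nth_iota // add0n.
      rewrite gez0_abs; last by apply: ltW; apply: (Dpos (inord i)).
      rewrite /M inord_val => /andP[h1 h2]; apply/andP; split; lia.
    exists (fun k : 'I_n.+1 => cs`_k) => i.
    rewrite -(inord_val i) (@sum_tri n A (fun k => cs`_k) i UT) // vecE inordK //.
    have := Hs i; rewrite ltn_ord /= => /(_ isT).
    rewrite !subn0 => <-.
    by apply: eq_bigr => k _; rewrite subn0.
  + move=> /(@char_fwd n A beta RI) [Hb [c Hc]].
    pose l := [seq beta (inord i) 0 | i <- iota 0 n.+1].
    have lE : vec l = beta.
      apply/matrixP => i j; rewrite (ord1 j) vecE (nth_map 0%N) ?size_iota //.
      by rewrite nth_iota // add0n inord_val.
    apply/mapP; exists l => //.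
    have szl : size l = n.+1 by rewrite size_map size_iota.
    rewrite mem_filter; apply/andP; split.
      rewrite (@sol_complete M w a n.+1 0 l (fun k => c (inord k))) //.
      move=> i /andP[_ ilt].
      rewrite subn0 -(@sum_tri n A (fun k => c (inord k)) i UT) //.
      have := Hc (inord i).
      rewrite -lE vecE inordK // => <-.
      by apply: eq_bigr => k _; rewrite inord_val.
    apply/mem_box; split; first by rewrite szl /ds size_map size_iota.
    rewrite /ds size_map size_iota => i ilt.
    rewrite (nth_map 0%N) ?size_iota // nth_iota // add0n.
    rewrite (nth_map 0%N) ?size_iota // nth_iota // add0n.
    rewrite gez0_abs; last by apply: ltW; apply: (Dpos (inord i)).
    have /andP[h1 h2] := Hb (inord i).
    rewrite /M; apply/andP; split; lia.
- rewrite size_map size_filter.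
  have := count_sol M w a n.+1 n.+1 0 a0 aM aw Mpos.
  rewrite -/ds => ->.
  by rewrite -/a -[in RHS](gez0_abs (ltW a0)) -!natz -natrX.
Qed.
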